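(* Let $(X,\ast,u,d)$ be a finite GL-rack whose diagonal map $\Delta$ is a single cycle of length $|X|$. Then $(X,\ast,u,d)$ is a permutation GL-rack; specifically, $x\ast y=\Delta(x)$ for all $x,y\in X$ and $u\circ d=\Delta^{-1}$.
   Context: A rack is a set $X$ with a binary operation $\ast$ such that for every $y\in X$ the map $x\mapsto x\ast y$ is a bijection of $X$ and $(x\ast y)\ast z=(x\ast z)\ast(y\ast z)$ for all $x,y,z$. A GL-rack is a quadruple $(X,\ast,u,d)$ where $(X,\ast)$ is a rack and $u,d\colon X\to X$ are maps such that for all $x,y\in X$: $u(d(x\ast x))=d(u(x\ast x))=x$; $u(x\ast y)=u(x)\ast y$ and $d(x\ast y)=d(x)\ast y$; $x\ast u(y)=x\ast d(y)=x\ast y$. The diagonal map is $\Delta(x)=x\ast x$; for a finite GL-rack it is a bijection and $\Delta=(u\circ d)^{-1}$. A permutation GL-rack is a GL-rack $(X,\ast,u,d)$ with $X$ finite and $x\ast y=\sigma(x)$ for all $x,y$, for some permutation $\sigma$ of $X$, with $u\circ d=\sigma^{-1}$. *)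

(* Defs.v *)
From mathcomp Require Import all_boot all_fingroup.
Set Implicit Arguments. Unset Strict Implicit. Unset Printing Implicit Defensive.

Definition is_rack (X : Type) (op : X -> X -> X) : Prop :=
  (forall y : X, bijective (fun x => op x y)) /\
  (forall x y z : X, op (op x y) z = op (op x z) (op y z)).

Definition is_GL_rack (X : Type) (op : X -> X -> X) (u d : X -> X) : Prop :=
  [/\ is_rack op,
      (forall x, u (d (op x x)) = x /\ d (u (op x x)) = x),
      (forall x y, u (op x y) = op (u x) y /\ d (op x y) = op (d x) y)
    & (forall x y, op x (u y) = op x y /\ op x (d y) = op x y)].

Definition diag (X : Type) (op : X -> X -> X) : X -> X := fun x => op x x.

(* f is a single cycle of length |X| : f is a permutation of X and
   every point reaches every other point by iterating f. *)
Definition is_full_cycle (X : finType) (f : X -> X) : Prop :=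
  bijective f /\ (forall x y : X, fconnect f x y).

Definition is_permutation_GL_rack (X : finType) (op : X -> X -> X) (u d : X -> X)
  : Prop :=
  is_GL_rack op u d /\
  exists sigma : {perm X},
    (forall x y, op x y = sigma x) /\ (forall x, u (d x) = (sigma^-1)%g x).

(* Main.v *)
Require Import Defs.
From mathcomp Require Import all_boot all_fingroup.

Theorem corollary3p4 (X : finType) (op : X -> X -> X) (u d : X -> X) :
  is_GL_rack op u d ->
  is_full_cycle (diag op) ->
  is_permutation_GL_rack op u d /\
  (forall x y, op x y = diag op x) /\
  (forall x, diag op (u (d x)) = x /\ u (d (diag op x)) = x).
Proof.
move=> HGL; have HGL' := HGL; case: HGL' => [[Rbij Rdist] Hud _ _] [Dbij Dconn].
have Hop : forall x y, op x y = diag op x.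
  move=> x y; have := Dconn y x; move/iter_findex => <-.
  elim: (findex _ y x) => [|n IH] //=.
  set z := iter n (diag op) y in IH *.
  rewrite /diag /= Rdist IH //.
have inj : injective (diag op) by apply: bij_inj.
set sigma := perm inj.
have Hud2 : forall x, u (d x) = (sigma^-1)%g x.
  move=> x; rewrite -{1}(permKV sigma x) permE; exact: (Hud _).1.
split; first split => //.
  by exists sigma; split => // x y; rewrite permE Hop.
split => // x; split; last exact: (Hud _).1.
by rewrite Hud2; have := permKV sigma x; rewrite permE.
Qed.
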